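(* Let $k\ge 1$ be an integer and $p\in[0,1]$. Let $I_1,\dots,I_k$ be independent random variables with $P(I_j=1)=p$, $P(I_j=0)=1-p$. Let $P@i=\frac1i\sum_{j=1}^i I_j$ and $AP@k=\frac1k\sum_{i=1}^k P@i\cdot I_i$. Then $$\operatorname{Var}(AP@k)=\frac5k\,p^3(1-p)+\frac{1}{k^2}\,p(1-p)\Big[p(1-2p)\big(3H_k+H_k^2\big)+(1-p)(1-3p)H_k^{(2)}\Big],$$ where $H_k=\sum_{i=1}^k\frac1i$ and $H_k^{(2)}=\sum_{i=1}^k\frac1{i^2}$.
   Context: This is the online evaluation model: each of the top-$k$ recommended items is relevant independently with probability $p$ ($I_j=1$ iff the item at position $j$ is relevant). *)

(* Defs.v *)
(* discrete probability on the finite product space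
   {ffun 'I_k -> bool} of outcomes (I_1,...,I_k), with the product
   (independent Bernoulli(p)) probability mass function. *)
From mathcomp Require Import all_boot all_order all_algebra.
Set Implicit Arguments. Unset Strict Implicit. Unset Printing Implicit Defensive.
Import Order.TTheory GRing.Theory Num.Theory.
Local Open Scope ring_scope.

Section Defs.
Variable R : realFieldType.

Definition bern_prob (k : nat) (p : R) (w : {ffun 'I_k -> bool}) : R :=
  \prod_(j < k) (if w j then p else 1 - p).

Definition Expect (k : nat) (p : R) (X : {ffun 'I_k -> bool} -> R) : R :=
  \sum_(w : {ffun 'I_k -> bool}) bern_prob p w * X w.

Definition Var (k : nat) (p : R) (X : {ffun 'I_k -> bool} -> R) : R :=
  Expect p (fun w => (X w - Expect p X) ^+ 2).

(* the indicator I_{j+1} (0-based index j) *)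
Definition Ind (k : nat) (w : {ffun 'I_k -> bool}) (j : 'I_k) : R := (w j)%:R.

(* P@i = (1/i) * sum_{j=1}^i I_j  (1-based i; 0-based j < i) *)
Definition Pat (k : nat) (w : {ffun 'I_k -> bool}) (i : nat) : R :=
  (i%:R)^-1 * \sum_(j < k | (j < i)%N) Ind w j.

Definition APk (k : nat) (w : {ffun 'I_k -> bool}) : R :=
  (k%:R)^-1 * \sum_(i < k) Pat w i.+1 * Ind w i.

Definition Harm (k : nat) : R := \sum_(i < k) (i.+1%:R)^-1.
Definition Harm2 (k : nat) : R := \sum_(i < k) ((i.+1%:R) ^+ 2)^-1.
End Defs.

(* Main.v *)
Require Import Defs.
From mathcomp Require Import all_boot all_order all_algebra.
From mathcomp Require Import ring.
Import Order.TTheory GRing.Theory Num.Theory.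
Local Open Scope ring_scope.

Section Proof.
Variable R : realFieldType.
Variable p : R.

Local Notation W n := {ffun 'I_n -> bool}.

Definition ext n (b : bool) (w : W n) : W n.+1 :=
  [ffun i : 'I_n.+1 => match unlift ord_max i with Some j => w j | None => b end].
Arguments ext {n}.

Lemma ext_max n b (w : W n) : ext b w ord_max = b.
Proof. by rewrite ffunE unlift_none. Qed.

Lemma widen_lift n (i : 'I_n) : widen_ord (leqnSn n) i = lift ord_max i.
Proof. by apply/val_inj; exact: (esym (lift_max i)). Qed.

Lemma ext_widen n b (w : W n) i : ext b w (widen_ord (leqnSn n) i) = w i.
Proof. by rewrite widen_lift ffunE liftK. Qed.

Lemma sum_ext n (F : W n.+1 -> R) :
  \sum_(w : W n.+1) F w = \sum_(b : bool) \sum_(w : W n) F (ext b w).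
Proof.
rewrite pair_big /=.
rewrite (reindex (fun bw : bool * W n => ext bw.1 bw.2)) //=.
exists (fun w : W n.+1 => (w ord_max, [ffun j => w (lift ord_max j)])).
  move=> [b w] _ /=; rewrite ext_max; congr pair.
  by apply/ffunP => j; rewrite !ffunE liftK.
move=> w _ /=; apply/ffunP => i; rewrite ffunE.
by case: unliftP => [j ->|->]; rewrite ?ffunE ?liftK.
Qed.

Lemma bern_ext n b (w : W n) :
  bern_prob p (ext b w) = (if b then p else 1 - p) * bern_prob p w.
Proof.
rewrite /bern_prob big_ord_recr /= ext_max mulrC; congr (_ * _).
by apply: eq_bigr => i _; rewrite ext_widen.
Qed.

Lemma E_ext n (X : W n.+1 -> R) :
  Expect p X = p * Expect p (fun w => X (ext true w))
             + (1 - p) * Expect p (fun w => X (ext false w)).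
Proof.
rewrite /Expect sum_ext big_bool /= !mulr_sumr.
by congr (_ + _); apply: eq_bigr => w _; rewrite bern_ext mulrA.
Qed.

Lemma eq_Expect n (X Y : W n -> R) : (forall w, X w = Y w) ->
  Expect p X = Expect p Y.
Proof. by move=> h; apply: eq_bigr => w _; rewrite h. Qed.

Definition S n (w : W n) : R := \sum_(j < n) Ind R w j.
Definition A n (w : W n) : R := \sum_(i < n) Pat R w i.+1 * Ind R w i.
Arguments S {n}. Arguments A {n}.

Lemma S_ext n b (w : W n) : S (ext b w) = S w + b%:R.
Proof.
rewrite /S big_ord_recr /= /Ind ext_max; congr (_ + _).
by apply: eq_bigr => i _; rewrite ext_widen.
Qed.

Lemma Pat_ext n b (w : W n) (i : 'I_n) :
  Pat R (ext b w) i.+1 = Pat R w i.+1.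
Proof.
rewrite /Pat; congr (_ * _).
rewrite big_mkcond big_ord_recr /= ltnNge (ltn_ord i) /= addr0.
rewrite [RHS]big_mkcond; apply: eq_bigr => j _ /=.
by rewrite /Ind ext_widen.
Qed.

Lemma Pat_last n b (w : W n) :
  Pat R (ext b w) n.+1 = (n.+1%:R)^-1 * (S w + b%:R).
Proof.
rewrite /Pat; congr (_ * _).
rewrite (eq_bigl xpredT); last by move=> j; rewrite /= ltn_ord.
rewrite big_ord_recr /= /Ind ext_max; congr (_ + _).
by apply: eq_bigr => i _; rewrite ext_widen.
Qed.

Lemma A_ext n b (w : W n) :
  A (ext b w) = A w + (n.+1%:R)^-1 * (S w + b%:R) * b%:R.
Proof.
rewrite /A big_ord_recr /= Pat_last /Ind ext_max; congr (_ + _).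
apply: eq_bigr => i _; rewrite ext_widen.
by rewrite -(Pat_ext _ b w i).
Qed.

Definition P (c0 c1 c2 c3 c4 c5 a s : R) :=
  c0 + c1 * a + c2 * s + c3 * (a * s) + c4 * a ^+ 2 + c5 * s ^+ 2.

Definition E1 n := Expect p (fun _ : W n => 1).
Definition EA n := Expect p (@A n).
Definition ES n := Expect p (@S n).
Definition EAS n := Expect p (fun w : W n => A w * S w).
Definition EA2 n := Expect p (fun w : W n => A w ^+ 2).
Definition ES2 n := Expect p (fun w : W n => S w ^+ 2).

Definition PE n (c0 c1 c2 c3 c4 c5 : R) :=
  c0 * E1 n + c1 * EA n + c2 * ES n + c3 * EAS n + c4 * EA2 n + c5 * ES2 n.

Lemma E_P n c0 c1 c2 c3 c4 c5 :
  Expect p (fun w : W n => P c0 c1 c2 c3 c4 c5 (A w) (S w)) =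
  PE n c0 c1 c2 c3 c4 c5.
Proof.
rewrite /PE /E1 /EA /ES /EAS /EA2 /ES2 /Expect /P.
rewrite !mulr_sumr -!big_split /=.
by apply: eq_bigr => w _; ring.
Qed.

Lemma PE_step n c0 c1 c2 c3 c4 c5 :
  let u := (n.+1%:R)^-1 in
  PE n.+1 c0 c1 c2 c3 c4 c5 =
  p * PE n (c0 + c1 * u + c2 + c3 * u + c4 * u ^+ 2 + c5)
           (c1 + c3 + 2 * c4 * u)
           (c1 * u + c2 + 2 * c3 * u + 2 * c4 * u ^+ 2 + 2 * c5)
           (c3 + 2 * c4 * u) c4 (c3 * u + c4 * u ^+ 2 + c5)
  + (1 - p) * PE n c0 c1 c2 c3 c4 c5.
Proof.
move=> u; rewrite -!E_P E_ext; congr (_ * _ + _ * _).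
  apply: eq_Expect => w; rewrite A_ext S_ext /P -/u /=; ring.
apply: eq_Expect => w; rewrite A_ext S_ext /P /=; ring.
Qed.


Lemma Expect0 (X : W 0 -> R) : Expect p X = X [ffun i => false].
Proof.
rewrite /Expect (big_pred1 [ffun i => false]); last first.
  move=> w /=; apply/esym/eqP/ffunP => -[m hm]; by [].
by rewrite /bern_prob big_ord0 mul1r.
Qed.

Lemma Harm_S n : Harm R n.+1 = Harm R n + (n.+1%:R)^-1.
Proof. by rewrite /Harm big_ord_recr. Qed.
Lemma Harm2_S n : Harm2 R n.+1 = Harm2 R n + ((n.+1%:R) ^+ 2)^-1.
Proof. by rewrite /Harm2 big_ord_recr. Qed.

Definition fA n : R := n%:R * p ^+ 2 + p * (1 - p) * Harm R n.
Definition fS n : R := n%:R * p.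
Definition fS2 n : R := n%:R * p + n%:R * (n%:R - 1) * p ^+ 2.
Definition fAS n : R := p ^+ 3 * n%:R ^+ 2 + 2 * p ^+ 2 * (1 - p) * n%:R
  + (p ^+ 2 * (1 - p) * n%:R + p * (1 - p) * (1 - 2 * p)) * Harm R n.
Definition fA2 n : R := 5 * n%:R * p ^+ 3 * (1 - p)
  + p * (1 - p) * (p * (1 - 2 * p) * (3 * Harm R n + Harm R n ^+ 2)
       + (1 - p) * (1 - 3 * p) * Harm2 R n) + fA n ^+ 2.

Definition Mom n := [/\ E1 n = 1, EA n = fA n, ES n = fS n,
  EAS n = fAS n & EA2 n = fA2 n /\ ES2 n = fS2 n].

Lemma PE_closed n c0 c1 c2 c3 c4 c5 : Mom n ->
  PE n c0 c1 c2 c3 c4 c5 =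
  c0 + c1 * fA n + c2 * fS n + c3 * fAS n + c4 * fA2 n + c5 * fS2 n.
Proof. by case=> h1 h2 h3 h4 [h5 h6]; rewrite /PE h1 h2 h3 h4 h5 h6 mulr1. Qed.

Lemma moments n : Mom n.
Proof.
elim: n => [|n IH].
  rewrite /Mom /E1 /EA /ES /EAS /EA2 /ES2 !Expect0 /A /S big_ord0.
  rewrite /fA2 /fA /fS /fAS /fS2 /Harm /Harm2 !big_ord0.
  split; try ring; split; ring.
have hn : n.+1%:R != 0 :> R by rewrite pnatr_eq0.
have e1 : E1 n.+1 = PE n.+1 1 0 0 0 0 0 by rewrite /PE; ring.
have eA : EA n.+1 = PE n.+1 0 1 0 0 0 0 by rewrite /PE; ring.
have eS : ES n.+1 = PE n.+1 0 0 1 0 0 0 by rewrite /PE; ring.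
have eAS : EAS n.+1 = PE n.+1 0 0 0 1 0 0 by rewrite /PE; ring.
have eA2 : EA2 n.+1 = PE n.+1 0 0 0 0 1 0 by rewrite /PE; ring.
have eS2 : ES2 n.+1 = PE n.+1 0 0 0 0 0 1 by rewrite /PE; ring.
rewrite /Mom e1 eA eS eAS eA2 eS2 !PE_step !PE_closed //.
rewrite /fA2 /fA /fS /fAS /fS2 !Harm_S !Harm2_S.
split; [field|field|field|field|split; field]. all: by rewrite -mulrS.
Qed.

End Proof.

Theorem theorem4 (R : realFieldType) (k : nat) (p : R)
  (hk : (1 <= k)%N) (hp0 : 0 <= p) (hp1 : p <= 1) :
  Var p (@APk R k) =
    5 / k%:R * p ^+ 3 * (1 - p)
    + (k%:R ^+ 2)^-1 * p * (1 - p) *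
      (p * (1 - 2 * p) * (3 * Harm R k + Harm R k ^+ 2)
       + (1 - p) * (1 - 3 * p) * Harm2 R k).
Proof.
have hk0 : k%:R != 0 :> R by rewrite pnatr_eq0 -lt0n.
have hAP : forall w : {ffun 'I_k -> bool}, APk R w = (k%:R)^-1 * @A R k w by [].
have [h1 h2 h3 h4 [h5 h6]] := moments R p k.
have hm : Expect p (@APk R k) = (k%:R)^-1 * fA R p k.
  rewrite (@eq_Expect R p k _ (fun w => P R 0 (k%:R)^-1 0 0 0 0 (@A R k w) (@S R k w))).
    by rewrite E_P /PE h1 h2; ring.
  by move=> w; rewrite hAP /P; ring.
rewrite /Var hm.
set m := (k%:R)^-1 * fA R p k.
rewrite (@eq_Expect R p k _ (fun w => P R (m ^+ 2) (- 2 * m * (k%:R)^-1) 0 0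
    ((k%:R)^-1 ^+ 2) 0 (@A R k w) (@S R k w))); last first.
  by move=> w; rewrite hAP /P; ring.
rewrite E_P /PE h1 h2 h3 h4 h5 h6 /m /fA2 /fA.
field; exact: hk0.
Qed.
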